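(* There is a constant $0<c<1$ such that $$\frac{\|F_{1,t}(z,w)\|}{\|(z,w)\|^4}\ge c|t|^2$$ for all $t\in\mathbb{C}$ with $|t|<1/16$ and all $(z,w)\ne(0,0)$. Consequently, for any marked point with associated maps $F_n$ and degree $d$ as in the context, for all $n\ge1$, $i\ge0$ and all $t$ with $|t|<1/16$, $$\frac{1}{\deg F_{n+i}}\log\|F_{n+i}(1,t)\|-\frac{1}{\deg F_n}\log\|F_n(1,t)\|\ge\frac{\log c}{4^{n-1}d}.$$
   Context: $F_{t_1,t_2}(z,w)=\big((t_1w^2-t_2z^2)^2,\;4t_2zw(w-z)(t_1w-t_2z)\big)$, so $F_{1,t}(z,w)=\big((w^2-tz^2)^2,\;4tzw(w-z)(w-tz)\big)$. $\|(z,w)\|=\max\{|z|,|w|\}$. For $c\in\mathbb{C}(t)\setminus\{0,1,t\}$ with homogeneous lift $C$ (coprime homogeneous polynomials $(c_1,c_2)$ of equal degree with $c(t)=c_1(t,1)/c_2(t,1)$): $F_1=F_{t_1,t_2}(C)/\gcd(F_{t_1,t_2}(C))$, $d=\deg F_1$, $F_{n+1}=F_{t_1,t_2}(F_n)/t_2^2$, $\deg F_n=4^{n-1}d$; in particular $F_{n+1}(1,t)=F_{1,t}(F_n(1,t))/t^2$. *)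

(* Defs.v *)
From mathcomp Require Import all_boot all_order all_algebra.
From mathcomp Require Import complex.
From mathcomp Require Import all_classical all_reals exp.
Set Implicit Arguments. Unset Strict Implicit. Unset Printing Implicit Defensive.
Import Order.TTheory GRing.Theory Num.Theory.
Local Open Scope ring_scope.

Definition cabs (R : realType) (z : R[i]) : R :=
  Num.sqrt (complex.Re z ^+ 2 + complex.Im z ^+ 2).

Definition nrm (R : realType) (v : R[i] * R[i]) : R :=
  Num.max (cabs v.1) (cabs v.2).

Definition F1t (R : realType) (t z w : R[i]) : R[i] * R[i] :=
  ((w ^+ 2 - t * z ^+ 2) ^+ 2, 4 * t * z * w * (w - z) * (w - t * z)).

Definition pev (R : realType) (P : {poly R[i]} * {poly R[i]}) (t : R[i])
  : R[i] * R[i] := (P.1.[t], P.2.[t]).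

Definition degF (d n : nat) : nat := 4 ^ n.-1 * d.

(* Main.v *)
Require Import Defs.
From mathcomp Require Import all_boot all_order all_algebra.
From mathcomp Require Import complex.
From mathcomp Require Import all_classical all_reals exp.
From mathcomp Require Import ring lra.
Import Order.TTheory GRing.Theory Num.Theory.
Local Open Scope ring_scope.
Import Num.Def.
Local Open Scope complex_scope.
Local Open Scope ring_scope.

Section S.
Variable R : realType.
Implicit Types x y z : R[i].
Lemma cabsE z : (cabs z)%:C = `|z|.
Proof. by rewrite normc_def. Qed.

Lemma cabs_ge0 z : 0 <= cabs z.
Proof. exact: sqrtr_ge0. Qed.

Lemma cabsM x y : cabs (x * y) = cabs x * cabs y.
Proof. by apply: complexI; rewrite rmorphM /= !cabsE normrM. Qed.

Lemma cabsX x n : cabs (x ^+ n) = cabs x ^+ n.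
Proof. by apply: complexI; rewrite rmorphXn /= !cabsE normrX. Qed.

Lemma cabsB x y : cabs x - cabs y <= cabs (x - y).
Proof. by rewrite -lecR rmorphB /= !cabsE lerB_dist. Qed.

Lemma cabs4 : cabs (4 : R[i]) = 4.
Proof. apply: complexI; rewrite cabsE /= ger0_norm //. by rewrite -(rmorph_nat (real_complex R)). Qed.

Lemma cabs_eq0 x : (cabs x == 0) = (x == 0).
Proof. by rewrite -(inj_eq (@complexI R)) cabsE normr_eq0. Qed.
Lemma keyR (a b s X e f : R): 0<=a -> 0<=b -> 0<=s -> s < 1/16 -> 0 <= X ->
  b^+2 - s*a^+2 <= X -> s*a^+2 - b^+2 <= X -> 0 <= e -> a - b <= e -> 0<=f -> b - s*a <= f ->
  1/4 * s^+2 * (Num.max a b)^+4 <= Num.max (X^+2) (4*s*a*b*e*f).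
Proof.
move=> a0 b0 s0 s1 X0 hX1 hX2 e0 he f0 hf.
have s1' : s <= 1/16 by lra.
case: (leP a b) => hab.
- rewrite le_max; apply/orP; left.
  have ha2 : a^+2 <= b^+2 by nra.
  have : b^+2 / 2 <= X by nra.
  move=> hX; have hb2: 0 <= b^+2 by nra.
  have hs2 : s^+2 <= 1 by nra.
  have : (b^+2/2)^+2 <= X^+2 by apply: ler_pM; nra.
  have : b^+4 = (b^+2)^+2 by rewrite -exprM.
  nra.
- idtac.
  have ha2 : 0 <= a^+2 by nra.
  set A := a^+2. set B := b^+2.
  rewrite -/A -/B in hX1 hX2 ha2.
  have a4 : a^+4 = A^+2 by rewrite /A -exprM.
  rewrite a4.
  case: (leP B (s*A/2)) => h1.
    rewrite le_max; apply/orP; left.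
    have hx : s*A/2 <= X by lra.
    have : (s*A/2)*(s*A/2) <= X*X by apply: ler_pM; nra.
    rewrite !expr2; nra.
  case: (leP (2*s*A) B) => h2.
    rewrite le_max; apply/orP; left.
    have hx : B/2 <= X by lra.
    have : (B/2)*(B/2) <= X*X by apply: ler_pM; nra.
    rewrite !expr2; nra.
  rewrite le_max; apply/orP; right.
  have sA : s*A <= A/16 by nra.
  have hb : b <= a/2.
    have hB : b^+2 <= a^+2/4 by rewrite -/A -/B; lra.
    nra.
  have hb2 : 2*s*a <= b.
    have hB : (2*s*a)^+2 <= b^+2.
      have -> : (2*s*a)^+2 = 4*s*(s*A) by rewrite /A; ring.
      rewrite -/B. have : s*(s*A) <= s*(A/16) by nra. lra.
    nra.
  have he2 : a/2 <= e by lra.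
  have hf2 : b/2 <= f by lra.
  have : s*a*b*(a/2)*(b/2) <= s*a*b*e*f.
    have h0 : 0 <= s*a*b by rewrite !mulr_ge0.
    have h1' : (a/2)*(b/2) <= e*f by apply: ler_pM; lra.
    by have := ler_wpM2l h0 h1'; rewrite !mulrA.
  rewrite /A /B in h1 h2 *.
  nra.
Qed.

Lemma cabsN x : cabs (- x) = cabs x.
Proof. by apply: complexI; rewrite !cabsE normrN. Qed.

Lemma cabs_distC x y : cabs (x - y) = cabs (y - x).
Proof. by rewrite -cabsN opprB. Qed.

Lemma part1 (t z w : R[i]) : cabs t < 1/16 -> (z,w) != (0,0) ->
  1/4 * cabs t ^+ 2 <= nrm (F1t t z w) / nrm (z,w) ^+ 4.
Proof.
move=> ht nz.
have hm : 0 < nrm (z, w).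
  rewrite /nrm /= lt_max.
  case: (eqVneq z 0) => [z0|z0].
    have w0 : w != 0 by move: nz; rewrite z0 xpair_eqE eqxx.
    by apply/orP; right; rewrite lt_def cabs_eq0 w0 cabs_ge0.
  by apply/orP; left; rewrite lt_def cabs_eq0 z0 cabs_ge0.
rewrite ler_pdivlMr ?exprn_gt0 //.
rewrite /nrm /F1t /=. rewrite (cabsX (w ^+ 2 - t * z ^+ 2) 2).
have -> : cabs (4 * t * z * w * (w - z) * (w - t * z)) =
  4 * cabs t * cabs z * cabs w * cabs (w - z) * cabs (w - t * z) by rewrite !cabsM cabs4.
apply: (keyR (cabs z) (cabs w) (cabs t) (cabs (w ^+ 2 - t * z ^+ 2)) (cabs (w-z)) (cabs (w - t*z))); rewrite ?cabs_ge0 //.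
- by have := cabsB (w^+2) (t * z^+2); rewrite cabsM !cabsX.
- by have := cabsB (t * z^+2) (w^+2); rewrite cabsM !cabsX cabs_distC.
- by have := cabsB z w; rewrite cabs_distC.
- by have := cabsB w (t * z); rewrite cabsM.
Qed.

Lemma poly_eq0 (p : {poly R[i]}) : (forall t, t != 0 -> p.[t] = 0) -> p = 0.
Proof.
move=> H; apply/eqP; apply: contraT => pn0.
have := @max_poly_roots _ p [seq (i.+1)%:R | i <- iota 0 (size p)] pn0.
rewrite size_map size_iota ltnn; apply.
- apply/allP => x /mapP [i _ ->]; apply/eqP/H.
  by rewrite pnatr_eq0.
- rewrite map_inj_uniq ?iota_uniq // => i j /eqP; rewrite eqr_nat eqSS => /eqP //.
Qed.

Lemma step0 (p q r : {poly R[i]}) :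
  (forall t, t ^+ 2 * r.[t] = (F1t t p.[t] q.[t]).1) ->
  q.[0] = 0 /\ r.[0] = p.[0] ^+ 4.
Proof.
move=> H.
have q0 : q.[0] = 0.
  have := H 0; rewrite /F1t /= !mul0r expr0n /= mul0r subr0 => /esym /eqP.
  by rewrite -exprM expf_eq0 /= => /eqP.
split => //.
have /factor_theorem [q' hq] : root q 0 by apply/eqP.
rewrite polyC0 subr0 in hq.
pose s := ('X * q' ^+ 2 - p ^+ 2) ^+ 2.
have hrs : r - s = 0.
  apply: poly_eq0 => t t0.
  have := H t; rewrite /F1t /= hq !(hornerD, hornerN, hornerM, hornerX, horner_exp) => h.
  apply/eqP; rewrite subr_eq0; apply/eqP.
  apply: (mulfI (expf_neq0 2 t0)); rewrite h; ring.
have : (r - s).[0] = 0 by rewrite hrs horner0.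
by rewrite hornerD hornerN => /eqP; rewrite subr_eq0 => /eqP ->; rewrite /s !(hornerD, hornerN, hornerM, hornerX, horner_exp); ring.
Qed.

Lemma nrm_ge0 (u v : R[i]) : 0 <= nrm (u, v).
Proof. by rewrite /nrm /= le_max cabs_ge0. Qed.

Lemma nrmZ (k u v : R[i]) : nrm (k * u, k * v) = cabs k * nrm (u, v).
Proof. by rewrite /nrm /= !cabsM maxr_pMr // cabs_ge0. Qed.

Lemma nrm_eq0 (u v : R[i]) : nrm (u, v) = 0 -> (u, v) = (0, 0).
Proof.
rewrite /nrm /= => h.
have hu : cabs u <= 0 by rewrite -h le_max lexx.
have hv : cabs v <= 0 by rewrite -h le_max lexx orbT.
have u0 : cabs u = 0 by apply/eqP; rewrite eq_le hu cabs_ge0.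
have v0 : cabs v = 0 by apply/eqP; rewrite eq_le hv cabs_ge0.
by move/eqP: u0; rewrite cabs_eq0 => /eqP ->; move/eqP: v0; rewrite cabs_eq0 => /eqP ->.
Qed.

Lemma nrm00 : nrm ((0 : R[i]), (0 : R[i])) = 0.
Proof. rewrite /nrm /=; have /eqP -> : cabs (0 : R[i]) == 0 by rewrite cabs_eq0. by case: (leP (0:R) 0). Qed.

Lemma stepN (x1 x2 y1 y2 t : R[i]) :
  t ^+ 2 * y1 = (F1t t x1 x2).1 -> t ^+ 2 * y2 = (F1t t x1 x2).2 ->
  t != 0 -> cabs t < 1/16 ->
  1/4 * nrm (x1, x2) ^+ 4 <= nrm (y1, y2) /\ (nrm (x1, x2) = 0 -> nrm (y1, y2) = 0).
Proof.
move=> h1 h2 t0 ht.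
have t2 : t ^+ 2 != 0 by rewrite expf_neq0.
have s2 : 0 < cabs t ^+ 2.
  by rewrite exprn_gt0 // lt_def cabs_eq0 t0 cabs_ge0.
have hF : nrm (F1t t x1 x2) = cabs t ^+ 2 * nrm (y1, y2).
  by rewrite -cabsX -nrmZ [F1t _ _ _]surjective_pairing -h1 -h2.
case: (eqVneq (x1, x2) (0, 0)) => [[]|nz].
  move=> e1 e2; rewrite e1 e2 in h1 h2 *.
  have hy : (y1, y2) = (0, 0).
    move: h1 h2; rewrite /F1t /= !(expr0n, subr0, mul0r, mulr0) /=.
    move=> /eqP; rewrite mulf_eq0 (negbTE t2) /= => /eqP ->.
    by move=> /eqP; rewrite mulf_eq0 (negbTE t2) /= => /eqP ->.
  rewrite nrm00 hy nrm00 expr0n /= mulr0; split => //.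
have := part1 t x1 x2 ht nz; rewrite hF => hp.
have hm : 0 < nrm (x1, x2).
  rewrite lt_def nrm_ge0 andbT; apply/eqP => /nrm_eq0 h; by rewrite h eqxx in nz.
move: hp; rewrite ler_pdivlMr ?exprn_gt0 // => h.
split; last by move=> e; rewrite e ltxx in hm.
rewrite -(ler_pM2l s2); apply: (le_trans _ h); rewrite mulrA (mulrC _ (1/4)). exact: lexx.
Qed.

Lemma chain (N : nat -> R) (n : nat) (D : R) : 0 < D ->
  (forall k, 0 <= N k) ->
  (forall k, (n <= k)%N -> 1/4 * N k ^+ 4 <= N k.+1) ->
  (forall k, (n <= k)%N -> N k = 0 -> N k.+1 = 0) ->
  forall i, ln (1/4) / D <= ln (N (n + i)%N) / ((4:R) ^+ i * D) - ln (N n) / D.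
Proof.
move=> D0 N0 H1 H2 i.
have q0 : (0:R) < 1/4 by lra.
have q0' : (0:R) < 4^-1 by rewrite invr_gt0.
have l0 : ln (1/4 : R) < 0 by apply: ln_lt0; lra.
set l := ln (1/4 : R) in l0 *.
have lD : l / D <= 0 by rewrite pmulr_lle0 ?invr_gt0 // ltW.
have u0 : forall j, 0 < (4:R) ^+ j by move=> j; rewrite exprn_gt0.
case: (eqVneq (N n) 0) => Nn0.
  have Z : forall j, N (n + j)%N = 0.
    elim=> [|j IH]; first by rewrite addn0.
    by rewrite addnS; apply: H2 => //; rewrite leq_addr.
  by rewrite Z Nn0 ln0 // !mul0r subrr.
have Np : forall j, 0 < N (n + j)%N.
  elim=> [|j IH]; first by rewrite addn0 lt_def Nn0 N0.
  rewrite addnS; apply: lt_le_trans (H1 _ (leq_addr _ _)).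
  apply: mulr_gt0; [lra | exact: exprn_gt0].
have rec : forall j, l + 4 * ln (N (n + j)%N) <= ln (N (n + j.+1)%N).
  move=> j.
  have h := H1 _ (leq_addr j n); rewrite -addnS in h.
  have p4 : 0 < N (n + j)%N ^+ 4 by rewrite exprn_gt0.
  rewrite -ler_ln ?posrE ?mulr_gt0 // in h.
  rewrite lnM ?posrE // in h.
  have e4 := lnXn 4 (Np j). rewrite e4 in h.
  have e5 : ln (N (n+j)%N) *+ 4 = 4 * ln (N (n+j)%N) by rewrite mulr_natl.
  by rewrite e5 in h.
set x0 := ln (N n).
have inv : forall j, (4:R) ^+ j * (x0 + l) - l <= ln (N (n + j)%N).
  elim=> [|j IH]; first by rewrite addn0 expr0 mul1r /x0; lra.
  have := rec j; set w := (4:R) ^+ j * (x0 + l) in IH *.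
  have -> : (4:R) ^+ j.+1 * (x0 + l) = 4 * w by rewrite exprS -mulrA.
  move=> h; lra.
set u := (4:R) ^+ i.
have uD : 0 < u * D by apply: mulr_gt0 => //; apply: u0.
set xi := ln _.
have key : xi / (u * D) - x0 / D - l / D
   = (xi - (u * (x0 + l) - l)) / (u * D) + (- l) / (u * D).
  by field; rewrite gt_eqF // gt_eqF // u0.
have k1 : 0 <= (xi - (u * (x0 + l) - l)) / (u * D).
  apply: divr_ge0; last exact: ltW. rewrite subr_ge0; exact: inv.
have k2 : 0 <= (- l) / (u * D) by apply: divr_ge0; [rewrite oppr_ge0; exact: ltW | exact: ltW].
lra.
Qed.

Lemma nrm_r0 (a : R[i]) : nrm (a, 0) = cabs a.
Proof.
rewrite /nrm /=; have /eqP -> : cabs (0 : R[i]) == 0 by rewrite cabs_eq0.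
by apply/max_idPl; exact: cabs_ge0.
Qed.
End S.

Local Close Scope complex_scope.
Local Open Scope ring_scope.

Theorem lemma4p4 (R : realType) :
  exists c : R, 0 < c < 1 /\
  (forall t z w : R[i], cabs t < 1 / 16 -> (z, w) != (0, 0) ->
     c * cabs t ^+ 2 <= nrm (F1t t z w) / nrm (z, w) ^+ 4) /\
  (forall (P : nat -> {poly R[i]} * {poly R[i]}) (d : nat),
     (0 < d)%N ->
     coprimep (P 1%N).1 (P 1%N).2 ->
     (forall (n : nat) (t : R[i]), (0 < n)%N ->
        t ^+ 2 * (P n.+1).1.[t] = (F1t t (P n).1.[t] (P n).2.[t]).1 /\
        t ^+ 2 * (P n.+1).2.[t] = (F1t t (P n).1.[t] (P n).2.[t]).2) ->
     forall (n i : nat) (t : R[i]), (0 < n)%N -> cabs t < 1 / 16 ->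
       ln c / (degF d n)%:R <=
         ln (nrm (pev (P (n + i)%N) t)) / (degF d (n + i))%:R
         - ln (nrm (pev (P n) t)) / (degF d n)%:R).
Proof.
exists (1/4); split; first by apply/andP; split; lra.
split.
  by move=> t z w ht nz; exact: part1.
move=> P d d0 _ H n i t n0 ht.
pose N := fun k => nrm (pev (P k) t).
have N0 : forall k, 0 <= N k by move=> k; exact: nrm_ge0.
have step : forall k, (n <= k)%N ->
    1/4 * N k ^+ 4 <= N k.+1 /\ (N k = 0 -> N k.+1 = 0).
  move=> k hk; have k0 : (0 < k)%N by apply: leq_trans hk.
  case: (eqVneq t 0) => [t0|t0]; last first.
    have [h1 h2] := H k t k0.
    exact: (@stepN R _ _ _ _ _ h1 h2 t0 ht).
  have [q0 r0] := @step0 R _ _ _ (fun t => (H k t k0).1).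
  have [q1 _] := @step0 R _ _ _ (fun t => (H k.+1 t (leq_trans k0 (leqnSn k))).1).
  have eN : N k.+1 = N k ^+ 4.
    by rewrite /N /pev t0 q1 r0 q0 !nrm_r0 cabsX.
  rewrite eN; split; last by move=> ->; rewrite expr0n.
  have : 0 <= N k ^+ 4 by apply: exprn_ge0.
  lra.
have eD : (degF d (n + i))%:R = (4:R) ^+ i * (degF d n)%:R.
  rewrite /degF -natrX -natrM; congr (_%:R).
  case: n n0 {step} => // n' _.
  by rewrite addSn /= expnD (mulnC (4 ^ n')%N) -mulnA.
rewrite eD.
have D0 : (0:R) < (degF d n)%:R by rewrite ltr0n /degF muln_gt0 expn_gt0 d0.
have := @chain R N n _ D0 N0 (fun k hk => (step k hk).1) (fun k hk => (step k hk).2) i.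
by rewrite /N.
Qed.
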